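(* Let $A\in\mathbb{R}^{n\times n}$, let $\bar T\ge1$ be an integer, let $\mathcal{W}\subset\mathbb{R}^n$ be a closed convex set with $0\in\mathcal{W}$, and let $\mathrm{sat}(\cdot|\mathcal{W}):\mathbb{R}^n\to\mathcal{W}$ be a map with $|\mathrm{sat}(w|\mathcal{W})-w|=\min\{|w'|:w+w'\in\mathcal{W}\}$ for all $w$. Define $\bar\eta=\sup\{\eta\ge0:\mathcal{B}_\eta\subset\mathcal{W}\}$, where $\mathcal{B}_\eta=\{w:|w|<\eta\}$, and assume $\bar\eta>0$. For $\mathbf{w}\in\ell^n$ define $\hat{\mathbf{w}}\in\ell^n$ recursively by $\hat w_t=w_t$ for $t<\bar T$ and $$\hat w_t=A^{\bar T}\big(\hat w_{t-\bar T}-\mathrm{sat}(\hat w_{t-\bar T}|\mathcal{W})\big)+w_t\quad(t\ge\bar T).$$ Let $p\in\{1,2,\dots\}\cup\{\infty\}$. Then: (1) for every $0\le\gamma<\min\{1,|A^{\bar T}|\}$: if $\|\mathbf{w}\|_p\le(1-\gamma)\frac{|A^{\bar T}|\,\bar\eta}{|A^{\bar T}|-\gamma}$, then $\|\hat{\mathbf{w}}\|_p\le\frac{1}{1-\gamma}\|\mathbf{w}\|_p$; (2) if $|A^{\bar T}|<1$, then for all $\mathbf{w}\in\ell^n_p$, $\|\hat{\mathbf{w}}\|_p\le\frac{1}{1-|A^{\bar T}|}\|\mathbf{w}\|_p$.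
   Context: $|\cdot|$ is a fixed norm on $\mathbb{R}^n$ and, for matrices, $|A|$ is the induced operator norm. $\ell^n$ is the space of sequences in $\mathbb{R}^n$, $\|\mathbf{x}\|_p=(\sum_k|x_k|^p)^{1/p}$ for $p<\infty$, $\|\mathbf{x}\|_\infty=\sup_k|x_k|$, $\ell^n_p=\{\mathbf{x}:\|\mathbf{x}\|_p<\infty\}$. (In the paper, $\hat{\mathbf{w}}$ is the internal state of a ''blended'' system level controller in closed loop with the saturated linear system $x_t=Ax_{t-1}+B\,\mathrm{sat}(u_{t-1}|\mathcal{U})+w_t$, whose dynamics reduce to the displayed recursion.) *)

(* Defs.v *)
From HB Require Import structures.
From mathcomp Require Import all_boot all_order all_algebra.
From mathcomp Require Import all_classical all_reals all_analysis.
Set Implicit Arguments. Unset Strict Implicit. Unset Printing Implicit Defensive.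
Import Order.TTheory GRing.Theory Num.Theory.
Import numFieldNormedType.Exports.
Local Open Scope classical_set_scope.
Local Open Scope ring_scope.

Definition is_norm (R : realType) (n : nat) (N : 'cV[R]_n -> R) : Prop :=
  [/\ forall x, N x = 0 -> x = 0,
      forall x y, N (x + y) <= N x + N y &
      forall (c : R) x, N (c *: x) = `|c| * N x].

Definition opnorm (R : realType) (n : nat) (N : 'cV[R]_n -> R) (M : 'M[R]_n) : R :=
  sup [set N (M *m x) | x in [set x | N x <= 1]].

Definition convex_set (R : realType) (n : nat) (W : set 'cV[R]_n) : Prop :=
  forall x y (t : R), W x -> W y -> 0 <= t <= 1 -> W (t *: x + (1 - t) *: y).

Definition is_sat (R : realType) (n : nat) (N : 'cV[R]_n -> R)
    (W : set 'cV[R]_n) (sat : 'cV[R]_n -> 'cV[R]_n) : Prop :=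
  forall w, W (sat w) /\ (forall w', W (w + w') -> N (sat w - w) <= N w').

Definition ball_N (R : realType) (n : nat) (N : 'cV[R]_n -> R) (eta : R) : set 'cV[R]_n :=
  [set w | N w < eta].

Definition etabar (R : realType) (n : nat) (N : 'cV[R]_n -> R) (W : set 'cV[R]_n) : \bar R :=
  ereal_sup [set eta%:E | eta in [set eta : R | 0 <= eta /\ ball_N N eta `<=` W]].

Inductive pexp := Pfin of nat | Pinf.
Definition pexp_ok (p : pexp) : Prop :=
  match p with Pfin q => (1 <= q)%N | Pinf => True end.

(* ||x||_p in the extended reals (= +oo when x is not in l^n_p). *)
Definition lpnorm (R : realType) (n : nat) (N : 'cV[R]_n -> R) (p : pexp)
    (x : nat -> 'cV[R]_n) : \bar R :=
  match p with
  | Pfin q => ((\sum_(0 <= k <oo) ((N (x k)) ^+ q)%:E) `^ (q%:R^-1))%E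
  | Pinf => ereal_sup [set (N (x k))%:E | k in [set: nat]]
  end.

(* Main.v *)
Set Warnings "-notation-overridden,-ambiguous-paths,-notation-incompatible-prefix".
Require Import Defs.
From HB Require Import structures.
From mathcomp Require Import all_boot all_order all_algebra.
From mathcomp Require Import all_classical all_reals all_analysis.
From mathcomp Require Import ring lra.
Import Order.TTheory GRing.Theory Num.Theory.
Import numFieldNormedType.Exports.
Local Open Scope classical_set_scope.
Local Open Scope ring_scope.
Section Norms.
Variable R : realType.

Lemma entry_le_norm k l (x : 'M[R]_(k,l)) i j : `|x i j| <= `|x|.
Proof.
rewrite (_ : `|x| = mx_norm x) // mx_normrE.
exact: (le_bigmax _ (fun ij : 'I_k * 'I_l => `|x ij.1 ij.2|) (i, j)).
Qed.

Lemma norm_le_entries k l (x : 'M[R]_(k,l)) c : 0 <= c ->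
  (forall i j, `|x i j| <= c) -> `|x| <= c.
Proof.
move=> c0 H; rewrite (_ : `|x| = mx_norm x) // mx_normrE.
by apply: bigmax_le => // -[i j] _; exact: H.
Qed.

Variables (a b : nat) (N : 'M[R]_(a,b) -> R).
Hypothesis hT : forall x y, N (x + y) <= N x + N y.
Hypothesis hZ : forall (c : R) x, N (c *: x) = `|c| * N x.

Lemma N0 : N 0 = 0.
Proof. by rewrite -(scale0r 0) hZ normr0 mul0r. Qed.

Lemma NN x : N (- x) = N x.
Proof. by rewrite -scaleN1r hZ normrN normr1 mul1r. Qed.

Lemma Nge0 x : 0 <= N x.
Proof.
have := hT x (- x); rewrite subrr N0 NN => H.
by rewrite -(@pmulr_rge0 _ 2) // mulr2n mulrDl mul1r.
Qed.

Lemma Nsum (I : Type) (r : seq I) (P : pred I) (F : I -> 'M[R]_(a,b)) :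
  N (\sum_(i <- r | P i) F i) <= \sum_(i <- r | P i) N (F i).
Proof.
apply: (big_ind2 (fun u v => N u <= v)); first by rewrite N0.
  by move=> x1 x2 y1 y2 h1 h2; apply: le_trans (hT _ _) _; exact: lerD.
by [].
Qed.

Lemma Ncomb k l (x : 'M[R]_(k,l)) (v : 'I_k -> 'I_l -> 'M[R]_(a,b)) :
  N (\sum_i \sum_j x i j *: v i j) <= `|x| * \sum_i \sum_j N (v i j).
Proof.
apply: (le_trans (Nsum _ _ _ _)); rewrite mulr_sumr; apply: ler_sum => i _.
apply: (le_trans (Nsum _ _ _ _)); rewrite mulr_sumr; apply: ler_sum => j _.
by rewrite hZ ler_wpM2r ?Nge0 ?entry_le_norm.
Qed.

Lemma Nupper : exists K, 0 <= K /\ forall x, N x <= K * `|x|.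
Proof.
exists (\sum_i \sum_j N (delta_mx i j)); split.
  by apply: sumr_ge0 => i _; apply: sumr_ge0 => j _; exact: Nge0.
by move=> x; rewrite mulrC {1}(matrix_sum_delta x); exact: Ncomb.
Qed.

End Norms.

Section Lower.
Variable R : realType.
Variables (n : nat) (N : 'cV[R]_n -> R).
Hypothesis hN : is_norm N.

Lemma Nlower : exists m, 0 < m /\ forall x, m * `|x| <= N x.
Proof.
move: hN; rewrite /is_norm => -[h0 hT hZ].
pose f (v : 'rV[R]_n) := N v^T.
have fT : forall u v, f (u + v) <= f u + f v by move=> u v; rewrite /f linearD /=; exact: hT.
have fZ : forall c u, f (c *: u) = `|c| * f u by move=> c u; rewrite /f linearZ /=; exact: hZ.
have [K [K0 HK]] := @Nupper _ _ _ f fT fZ.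
have fge0 := @Nge0 _ _ _ f fT fZ.
have fNN := @NN _ _ _ f fZ.
have fcont : continuous f.
  move=> v; apply/(@cvgrPdist_lt _ _ _ _ (nbhs_filter v)) => e e0.
  have K1 : 0 < K + 1 by rewrite ltr_wpDl.
  have Hn := @cvgr_dist_lt _ _ _ (nbhs v) (nbhs_filter v) id v cvg_id _ (divr_gt0 e0 K1).
  apply: (filterS _ Hn) => y /= Hy.
  have Hd : `|v - y| * (K + 1) < e by rewrite -ltr_pdivlMr.
  have H1 := fT y (v - y); rewrite addrC subrK in H1.
  have H2 := fT v (y - v); rewrite addrC subrK -opprB fNN in H2.
  have H3 := HK (v - y).
  have H4 : 0 <= `|v - y| by [].
  rewrite ltr_norml; apply/andP; split; nra.
have [[v0 hv0]|hnone] := pselect (exists v : 'rV[R]_n, v != 0); last first.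
  exists 1; split => // x.
  have : x^T = 0 by apply/eqP; apply: contra_notT hnone => H; exists x^T.
  move/(congr1 trmx); rewrite trmxK trmx0 => ->.
  by rewrite normr0 mulr0 (@N0 _ _ _ N hZ).
pose S := [set v : 'rV[R]_n | `|v| = 1].
have v0n : 0 < `|v0| by rewrite normr_gt0.
have S0 : S !=set0.
  exists (`|v0|^-1 *: v0); rewrite /S /= normrZ ger0_norm ?invr_ge0 ?normr_ge0 //.
  by rewrite mulVf // gt_eqF.
have Sc : compact S.
  apply: bounded_closed_compact.
    exists 1; split => // M M1 x /= ->; exact: ltW.
  exact: ((continuous_closedP (fun v : 'rV[R]_n => `|v|)).1 (@norm_continuous _ _) [set 1] (@closed_eq R 1)).
have [c cS cmin] := compact_EVT_min S0 Sc (continuous_subspaceT fcont).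
move: cS; rewrite inE => cS.
have fc0 : 0 < f c.
  rewrite lt_neqAle fge0 andbT; apply/eqP => /esym /h0 /(congr1 trmx).
  rewrite trmxK trmx0 => c0; move: cS; rewrite c0 /S /= normr0 => /eqP.
  by rewrite eq_sym oner_eq0.
have Hr : forall v, f c * `|v| <= f v.
  move=> v; have [->|vn] := eqVneq v 0; first by rewrite normr0 mulr0 fge0.
  have vp : 0 < `|v| by rewrite normr_gt0.
  have := cmin (`|v|^-1 *: v); rewrite inE /S /= normrZ ger0_norm ?invr_ge0 ?normr_ge0 //.
  rewrite mulVf ?gt_eqF // fZ ger0_norm ?invr_ge0 ?normr_ge0 // => /(_ erefl).
  by rewrite mulrC ler_pdivlMr.
exists (f c); split => // x.
apply: (le_trans (y := f c * `|x^T|)).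
  rewrite ler_wpM2l ?(ltW fc0) //; apply: norm_le_entries => // i j.
  by have := @entry_le_norm R 1 n x^T j i; rewrite mxE.
by apply: (le_trans (Hr _)); rewrite /f trmxK.
Qed.
End Lower.

Section Op.
Variable R : realType.
Variables (n : nat) (N : 'cV[R]_n -> R).
Hypothesis hN : is_norm N.

Lemma opnorm_bound (M : 'M[R]_n) :
  0 <= opnorm N M /\ forall x, N (M *m x) <= opnorm N M * N x.
Proof.
move: (hN); rewrite /is_norm => -[h0 hT hZ].
have [m [m0 Hm]] := @Nlower R n N hN.
have N0' := @N0 _ _ _ N hZ.
have Nge := @Nge0 _ _ _ N hT hZ.
set K := \sum_i \sum_j N (M *m delta_mx i j).
have K0 : 0 <= K by apply: sumr_ge0 => i _; apply: sumr_ge0 => j _.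
have HMx : forall x, N (M *m x) <= `|x| * K.
  move=> x; rewrite {1}(matrix_sum_delta x) mulmx_sumr.
  under eq_bigr do rewrite mulmx_sumr.
  under eq_bigr do under eq_bigr do rewrite -scalemxAr.
  exact: (@Ncomb R n 1 N hT hZ n 1 x (fun i j => M *m delta_mx i j)).
set E := [set N (M *m x) | x in [set x | N x <= 1]].
have hs : has_sup E.
  split; first by exists 0; exists 0; rewrite /= ?mulmx0 N0'.
  exists (m^-1 * K) => y [x /= Hx <-].
  apply: (le_trans (HMx x)); rewrite ler_wpM2r //.
  by rewrite -[m^-1]mulr1 ler_pdivlMl // (le_trans (Hm x)).
have ub := sup_upper_bound hs.
have a0 : 0 <= opnorm N M.
  have := ub 0; rewrite /opnorm -/E; apply.
  by exists 0; rewrite /= ?mulmx0 N0'.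
split => // x.
have [x0|xn] := eqVneq (N x) 0.
  by rewrite (h0 _ x0) mulmx0 N0' mulr0.
have xp : 0 < N x by rewrite lt_neqAle eq_sym xn Nge.
have := ub (N (M *m ((N x)^-1 *: x))); rewrite /opnorm -/E.
rewrite -scalemxAr hZ ger0_norm ?invr_ge0 ?Nge // -ler_pdivlMl ?invr_gt0 // invrK mulrC.
rewrite [_ * N x]mulrC; apply; exists ((N x)^-1 *: x).
  by rewrite /= hZ ger0_norm ?invr_ge0 ?Nge // mulVf.
by rewrite -scalemxAr hZ ger0_norm ?invr_ge0 ?Nge // mulrC.
Qed.
End Op.

Section Seq.
Variable R : realType.

Definition sh (T : nat) (u : nat -> R) t := if (T <= t)%N then u (t - T)%N else 0.

Lemma powle (q : nat) (x y : R) : 0 <= x -> x <= y -> x ^+ q <= y ^+ q.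
Proof. by move=> x0 xy; apply: lerXn2r => //; rewrite nnegrE // (le_trans x0). Qed.

Lemma convex_pow (q : nat) (x y l : R) : 0 <= x -> 0 <= y -> 0 <= l -> l <= 1 ->
  (l * x + (1 - l) * y) ^+ q <= l * x ^+ q + (1 - l) * y ^+ q.
Proof.
move=> x0 y0 l0 l1; elim: q => [|q IH]; first by rewrite !expr0; lra.
have S0 : 0 <= l * x + (1 - l) * y by rewrite addr_ge0 // mulr_ge0 // subr_ge0.
rewrite exprS; apply: (le_trans (ler_wpM2l S0 IH)).
have H : 0 <= (x - y) * (x ^+ q - y ^+ q).
  have [xy|yx] := leP x y.
    by apply: mulr_le0; rewrite subr_le0 //; apply: powle.
  by apply: mulr_ge0; rewrite subr_ge0; [exact: ltW|apply: powle => //; exact: ltW].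
have H2 : 0 <= l * (1 - l) * ((x - y) * (x ^+ q - y ^+ q)).
  by apply: mulr_ge0 => //; apply: mulr_ge0; lra.
rewrite !exprS; nra.
Qed.

Lemma sum_sh_eq (T : nat) (u : nat -> R) (q : nat) K : (0 < q)%N ->
  \sum_(0 <= t < K) (sh T u t) ^+ q = \sum_(0 <= t < K - T) u t ^+ q.
Proof.
move=> q0; elim: K => [|K IH]; first by rewrite sub0n !big_geq.
rewrite big_nat_recr //= IH /sh.
case: (leqP T K) => TK.
  by rewrite subSn // big_nat_recr.
have -> : (K.+1 - T = 0)%N by apply/eqP; rewrite subn_eq0.
have -> : (K - T = 0)%N by apply/eqP; rewrite subn_eq0 ltnW.
by rewrite expr0n gtn_eqF // addr0.
Qed.

Lemma sum_mono (f : nat -> R) a b : (forall t, 0 <= f t) -> (a <= b)%N ->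
  \sum_(0 <= t < a) f t <= \sum_(0 <= t < b) f t.
Proof.
move=> f0 /subnKC <-; elim: (b - a)%N => [|d IH]; first by rewrite addn0.
by rewrite addnS big_nat_recr //= (le_trans IH) // lerDl.
Qed.

End Seq.

Section Core.
Variable R : realType.
Local Notation sh := (@sh R).
Local Notation powle := (@powle R).
Local Notation convex_pow := (@convex_pow R).
Local Notation sum_sh_eq := (@sum_sh_eq R).
Local Notation sum_mono := (@sum_mono R).

Lemma core_fin (T q K : nat) (g : R) (u v : nat -> R) :
  (0 < q)%N -> 0 <= g -> g < 1 -> (forall t, 0 <= u t) -> (forall t, 0 <= v t) ->
  (forall t, (t < K)%N -> u t <= g * sh T u t + v t) ->
  \sum_(0 <= t < K) u t ^+ q <= ((1 - g)^-1) ^+ q * \sum_(0 <= t < K) v t ^+ q.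
Proof.
move=> q0 g0 g1 u0 v0 H.
set c := (1 - g)^-1.
have c0: 0 < c by rewrite invr_gt0 subr_gt0.
have gc : (1 - g) * c = 1 by rewrite mulfV // gt_eqF // subr_gt0.
have sh0 : forall t, 0 <= sh T u t by move=> t; rewrite /sh; case: ifP.
have step : forall t, (t < K)%N ->
    u t ^+ q <= g * (sh T u t) ^+ q + (1 - g) * (c ^+ q * v t ^+ q).
  move=> t tK; apply: (le_trans (powle q _ _ (u0 t) (H t tK))).
  have -> : g * sh T u t + v t = g * sh T u t + (1 - g) * (c * v t).
    by rewrite mulrA gc mul1r.
  rewrite -exprMn; apply: convex_pow => //; [by rewrite mulr_ge0 // ltW | exact: ltW].
set U := \sum_(0 <= t < K) u t ^+ q.
set V := \sum_(0 <= t < K) v t ^+ q.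
have S1 : U <= g * U + (1 - g) * (c ^+ q * V).
  apply: (le_trans (y := \sum_(0 <= t < K)
     (g * (sh T u t) ^+ q + (1 - g) * (c ^+ q * v t ^+ q)))).
    rewrite /U big_nat_cond [X in _ <= X]big_nat_cond.
    by apply: ler_sum => t /andP[/andP[_ tK] _]; exact: step.
  rewrite big_split /= -!mulr_sumr lerD2r ler_wpM2l //.
  rewrite sum_sh_eq //; apply: sum_mono; [move=> t; exact: exprn_ge0 | exact: leq_subr].
have S2 : (1 - g) * U <= (1 - g) * (c ^+ q * V) by lra.
by rewrite ler_pM2l ?subr_gt0 in S2.
Qed.

Lemma core_fin_cond (T q : nat) (g B : R) (u v : nat -> R) :
  (1 <= T)%N -> (0 < q)%N -> 0 <= g -> g < 1 -> 0 <= B ->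
  (forall t, 0 <= u t) -> (forall t, 0 <= v t) ->
  (forall t, sh T u t <= B -> u t <= g * sh T u t + v t) ->
  (forall K, ((1 - g)^-1) ^+ q * \sum_(0 <= t < K) v t ^+ q <= B ^+ q) ->
  forall K, \sum_(0 <= t < K) u t ^+ q <= ((1 - g)^-1) ^+ q * \sum_(0 <= t < K) v t ^+ q.
Proof.
move=> T1 q0 g0 g1 B0 u0 v0 H HB.
suff P : forall K t, (t < K)%N -> u t <= g * sh T u t + v t.
  by move=> K; apply: core_fin => //; exact: P.
elim=> [|K IH] t //.
rewrite ltnS leq_eqVlt => /orP[/eqP ->|]; last exact: IH.
apply: H; rewrite /sh; case: ifP => TK //.
have S := @core_fin T q K g u v q0 g0 g1 u0 v0 IH.
have KT : (K - T < K)%N by rewrite ltn_subrL; apply/andP; split => //; exact: (leq_trans T1 TK).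
have S3 : u (K - T)%N ^+ q <= \sum_(0 <= t < K) u t ^+ q.
  rewrite big_mkord (bigD1 (Ordinal KT)) //= lerDl.
  by apply: sumr_ge0 => i _; exact: exprn_ge0.
rewrite -(ler_pXn2r q0) ?nnegrE //.
exact: (le_trans S3 (le_trans S (HB K))).
Qed.

Lemma core_inf (T : nat) (g B V : R) (u v : nat -> R) :
  (1 <= T)%N -> 0 <= g -> g < 1 -> 0 <= V -> V / (1 - g) <= B ->
  (forall t, 0 <= u t) -> (forall t, v t <= V) ->
  (forall t, sh T u t <= B -> u t <= g * sh T u t + v t) ->
  forall t, u t <= V / (1 - g).
Proof.
move=> T1 g0 g1 V0 VB u0 vV H.
have c0 : 0 < 1 - g by rewrite subr_gt0.
have Vc0 : 0 <= V / (1 - g) by rewrite divr_ge0 // ltW.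
elim/ltn_ind => t IH.
have Hs : sh T u t <= V / (1 - g).
  rewrite /sh; case: ifP => TK //; apply: IH.
  rewrite ltn_subrL; apply/andP; split => //; exact: (leq_trans T1 TK).
have := H t (le_trans Hs VB) => Ht.
apply: (le_trans Ht).
have -> : V / (1 - g) = g * (V / (1 - g)) + V.
  by field; rewrite gt_eqF.
by apply: lerD; [rewrite ler_wpM2l | exact: vV].
Qed.

End Core.

Section Sat.
Variable R : realType.
Variables (n : nat) (N : 'cV[R]_n -> R) (W : set 'cV[R]_n) (sat : 'cV[R]_n -> 'cV[R]_n).
Hypothesis hN : is_norm N.
Hypothesis hsat : is_sat N W sat.
Hypothesis W0 : W 0.

Lemma Nsym x : N (- x) = N x.
Proof. by move: hN => -[_ _ hZ]; exact: (@NN _ _ _ N hZ). Qed.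

Lemma N0v : N 0 = 0.
Proof. by move: hN => -[_ _ hZ]; exact: (@N0 _ _ _ N hZ). Qed.

Lemma Nge0v x : 0 <= N x.
Proof. by move: hN => -[_ hT hZ]; exact: (@Nge0 _ _ _ N hT hZ). Qed.

Lemma sat_le h : N (h - sat h) <= N h.
Proof.
have [_ Hm] := hsat h.
rewrite -Nsym opprB -(Nsym h); apply: Hm; by rewrite subrr.
Qed.

Lemma sat_in h : W h -> N (h - sat h) <= 0.
Proof.
move=> Wh; have [_ Hm] := hsat h.
by rewrite -Nsym opprB -N0v; apply: Hm; rewrite addr0.
Qed.

Lemma sat_ball h eta e' : ball_N N eta `<=` W -> 0 <= e' -> e' < eta ->
  N (h - sat h) <= 0 \/ N (h - sat h) <= N h - e'.
Proof.
move=> Hb e0 ee.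
have [Hh|Hh] := ltP (N h) eta; first by left; apply: sat_in; exact: Hb.
right.
have Nh0 : 0 < N h by apply: lt_le_trans Hh; exact: le_lt_trans ee.
set c := e' / N h.
have c0 : 0 <= c by rewrite divr_ge0 // Nge0v.
have c1 : c <= 1 by rewrite ler_pdivrMr // mul1r; apply: ltW; exact: lt_le_trans Hh.
have [_ Hm] := hsat h.
move: hN => -[_ _ hZ].
have Wc : W (h + (c - 1) *: h).
  rewrite scalerBl scale1r addrC subrK; apply: Hb.
  by rewrite /ball_N /= hZ ger0_norm // /c mulfVK // gt_eqF.
rewrite -Nsym opprB; apply: (le_trans (Hm _ Wc)).
by rewrite hZ ler0_norm ?subr_le0 // opprB mulrBl mul1r /c mulfVK // gt_eqF.
Qed.

Lemma sat_fin h E : etabar N W = E%:E -> 0 < E ->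
  N (h - sat h) <= 0 \/ N (h - sat h) <= N h - E.
Proof.
move=> hE E0.
have Hs : forall e', 0 <= e' -> e' < E ->
    N (h - sat h) <= 0 \/ N (h - sat h) <= N h - e'.
  move=> e' e0 eE.
  have : (e'%:E < etabar N W)%E by rewrite hE lte_fin.
  move=> /ereal_sup_gt [_ [eta [eta0 Hb] <-]]; rewrite lte_fin => ee.
  exact: (sat_ball h _ _ Hb e0 ee).
set X := N (h - sat h).
have [X0|X0] := leP X 0; first by left.
right; rewrite leNgt; apply/negP => Hlt.
pose d := X - (N h - E).
have dE : d = X - (N h - E) by [].
have d0 : 0 < d by rewrite subr_gt0.
have [Ed|Ed] := leP E d.
  have H1 : 0 <= E / 2 by lra.
  have H2 : E / 2 < E by lra.
  by case: (Hs _ H1 H2); rewrite -/X; lra.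
have H1 : 0 <= E - d / 2 by lra.
have H2 : E - d / 2 < E by lra.
by case: (Hs _ H1 H2); rewrite -/X; lra.
Qed.

Lemma sat_inf h : etabar N W = +oo%E -> N (h - sat h) <= 0.
Proof.
move=> hE.
have : ((N h)%:E < etabar N W)%E by rewrite hE ltry.
move=> /ereal_sup_gt [_ [eta [eta0 Hb] <-]]; rewrite lte_fin => ee.
by apply: sat_in; apply: Hb.
Qed.

End Sat.

Section Lp.
Variable R : realType.
Local Notation sh := (@sh R).

Definition lpr (p : pexp) (u : nat -> R) : \bar R :=
  match p with
  | Pfin q => ((\sum_(0 <= k <oo) ((u k) ^+ q)%:E) `^ (q%:R^-1))%E
  | Pinf => ereal_sup [set (u k)%:E | k in [set: nat]]
  end.

Lemma lp_fin_le (q : nat) (c : R) (u v : nat -> R) : (0 < q)%N -> 0 <= c ->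
  (forall t, 0 <= u t) -> (forall t, 0 <= v t) ->
  (forall K, \sum_(0 <= t < K) u t ^+ q <= c ^+ q * \sum_(0 <= t < K) v t ^+ q) ->
  (lpr (Pfin q) u <= c%:E * lpr (Pfin q) v)%E.
Proof.
move=> q0 c0 u0 v0 H; rewrite /lpr.
have u0' : forall n, (0 <= n)%N -> true -> (0 <= ((u n) ^+ q)%:E)%E.
  by move=> k _ _; rewrite lee_fin exprn_ge0.
have v0' : forall n, (0 <= n)%N -> true -> (0 <= ((v n) ^+ q)%:E)%E.
  by move=> k _ _; rewrite lee_fin exprn_ge0.
have H1 : (\sum_(0 <= k <oo) ((u k) ^+ q)%:E <=
           (c ^+ q)%:E * \sum_(0 <= k <oo) ((v k) ^+ q)%:E)%E.
  apply: (lime_le (is_cvg_nneseries u0')); apply: nearW => K.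
  rewrite sumEFin; apply: (le_trans (y := ((c ^+ q)%:E * (\sum_(0 <= t < K) (v t ^+ q))%:E)%E)).
    by rewrite -EFinM lee_fin; exact: H.
  apply: lee_wpmul2l; first by rewrite lee_fin exprn_ge0.
  rewrite -sumEFin; exact: nneseries_lim_ge.
have Hc : (((c ^+ q)%:E) `^ (q%:R^-1) = c%:E)%E.
  rewrite poweR_EFin -powR_mulrn // -powRrM mulfV ?powRr1 //.
  by rewrite pnatr_eq0 -lt0n.
rewrite -{1}Hc -poweRM; last 2 first.
    by rewrite lee_fin exprn_ge0.
  exact: nneseries_ge0.
apply: gt0_ler_poweR => //.
- by rewrite in_itv /= leey andbT nneseries_ge0.
- by rewrite in_itv /= leey andbT mule_ge0 ?lee_fin ?exprn_ge0 ?nneseries_ge0.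
Qed.

Lemma lp_fin_bound (q : nat) (u : nat -> R) (Y : R) K : (0 < q)%N ->
  (forall t, 0 <= u t) -> 0 <= Y -> (lpr (Pfin q) u <= Y%:E)%E ->
  \sum_(0 <= t < K) u t ^+ q <= Y ^+ q.
Proof.
move=> q0 u0 Y0; rewrite /lpr => H.
have u0' : forall n, (0 <= n)%N -> true -> (0 <= ((u n) ^+ q)%:E)%E.
  by move=> k _ _; rewrite lee_fin exprn_ge0.
set S := (\sum_(0 <= k <oo) ((u k) ^+ q)%:E)%E in H *.
have S0 : (0 <= S)%E by exact: nneseries_ge0.
have HS : S = ((S `^ (q%:R^-1)) `^ q%:R)%E.
  by rewrite -poweRrM mulVf ?poweRe1 // pnatr_eq0 -lt0n.
rewrite -lee_fin -sumEFin; apply: (le_trans (nneseries_lim_ge _ u0')).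
rewrite -/S HS -powR_mulrn // -poweR_EFin; apply: gt0_ler_poweR => //.
- by rewrite in_itv /= leey andbT poweR_ge0.
- by rewrite in_itv /= leey andbT lee_fin.
Qed.

Lemma lp_inf_bound (u : nat -> R) (Y : R) t : (lpr Pinf u <= Y%:E)%E -> u t <= Y.
Proof.
rewrite -lee_fin; apply: le_trans; apply: ereal_sup_ubound; by exists t.
Qed.

Lemma lp_inf_le (u v : nat -> R) (c : R) : 0 < c -> (forall t, 0 <= v t) ->
  (forall V, lpr Pinf v = V%:E -> forall t, u t <= c * V) ->
  (lpr Pinf u <= c%:E * lpr Pinf v)%E.
Proof.
move=> c0 v0 H; case E: (lpr Pinf v) => [V| |].
- apply: ge_ereal_sup => _ [t _ <-]; rewrite -EFinM lee_fin; exact: H.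
- by rewrite mulry gtr0_sg ?mul1e ?lte_fin // leey.
- have : ((v 0%N)%:E <= lpr Pinf v)%E by apply: ereal_sup_ubound; exists 0%N.
  by rewrite E leeNy_eq.
Qed.

End Lp.

Section Main.
Variable R : realType.
Local Notation sh := (@sh R).
Local Notation lpr := (@lpr R).

Lemma lp_main2 p T (g : R) u v : pexp_ok p -> (1 <= T)%N -> 0 <= g -> g < 1 ->
  (forall t, 0 <= u t) -> (forall t, 0 <= v t) ->
  (forall t, u t <= g * sh T u t + v t) ->
  (lpr p u <= ((1 - g)^-1)%:E * lpr p v)%E.
Proof.
move=> hp T1 g0 g1 u0 v0 H.
have c0 : 0 < (1 - g)^-1 by rewrite invr_gt0 subr_gt0.
case: p hp => [q|] /= hp.
  apply: lp_fin_le => //; first exact: ltW.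
  by move=> K; apply: core_fin.
apply: lp_inf_le => // V hV t.
have vV : forall s, v s <= V by move=> s; apply: lp_inf_bound; rewrite hV.
have V0 : 0 <= V by apply: le_trans (vV 0%N).
rewrite mulrC; apply: (@core_inf R T g (V / (1 - g)) V u v) => //.
Qed.

Lemma lp_main1 p T (g B : R) u v : pexp_ok p -> (1 <= T)%N -> 0 <= g -> g < 1 ->
  0 <= B -> (forall t, 0 <= u t) -> (forall t, 0 <= v t) ->
  (forall t, sh T u t <= B -> u t <= g * sh T u t + v t) ->
  (lpr p v <= ((1 - g) * B)%:E)%E ->
  (lpr p u <= ((1 - g)^-1)%:E * lpr p v)%E.
Proof.
move=> hp T1 g0 g1 B0 u0 v0 H hv.
have c0 : 0 < (1 - g)^-1 by rewrite invr_gt0 subr_gt0.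
have gB : 0 <= (1 - g) * B by rewrite mulr_ge0 // subr_ge0 ltW.
case: p hp hv => [q|] hp hv.
  apply: lp_fin_le => //; first exact: ltW.
  apply: (@core_fin_cond R T q g B) => // K.
  have := @lp_fin_bound R q v _ K hp v0 gB hv => HK.
  apply: (le_trans (ler_wpM2l (exprn_ge0 _ (ltW c0)) HK)).
  by rewrite -exprMn mulrA mulVf ?mul1r // gt_eqF // subr_gt0.
apply: lp_inf_le => // V hV t.
have vV : forall s, v s <= V by move=> s; apply: lp_inf_bound; rewrite hV.
have V0 : 0 <= V by apply: le_trans (vV 0%N).
have VB : V <= (1 - g) * B by move: hv; rewrite hV lee_fin.
rewrite mulrC; apply: (@core_inf R T g B V u v) => //.
by rewrite ler_pdivrMr ?subr_gt0 // mulrC.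
Qed.

End Main.

Theorem mainTheorem9 (R : realType) (n : nat) (N : 'cV[R]_n -> R)
  (A : 'M[R]_n) (Tbar : nat) (W : set 'cV[R]_n) (sat : 'cV[R]_n -> 'cV[R]_n)
  (p : pexp) (w what : nat -> 'cV[R]_n) :
  is_norm N -> (1 <= Tbar)%N ->
  closed W -> convex_set W -> W 0 ->
  is_sat N W sat ->
  (0 < etabar N W)%E ->
  pexp_ok p ->
  (forall t, (t < Tbar)%N -> what t = w t) ->
  (forall t, (Tbar <= t)%N ->
     what t = (A ^+ Tbar) *m (what (t - Tbar)%N - sat (what (t - Tbar)%N)) + w t) ->
  (forall gamma : R, 0 <= gamma -> gamma < Num.min 1 (opnorm N (A ^+ Tbar)) ->
     (lpnorm N p w <= ((1 - gamma) * opnorm N (A ^+ Tbar)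
                       / (opnorm N (A ^+ Tbar) - gamma))%:E * etabar N W)%E ->
     (lpnorm N p what <= ((1 - gamma)^-1)%:E * lpnorm N p w)%E)
  /\
  (opnorm N (A ^+ Tbar) < 1 ->
     (lpnorm N p w < +oo)%E ->
     (lpnorm N p what <= ((1 - opnorm N (A ^+ Tbar))^-1)%:E * lpnorm N p w)%E).
Proof.
move=> hN T1 _ _ W0 hsat heta hp hlow hhigh.
set a := opnorm N (A ^+ Tbar).
have [a0 Ha] := @opnorm_bound R n N hN (A ^+ Tbar).
pose u t := N (what t).
pose v t := N (w t).
have u0 : forall t, 0 <= u t by move=> t; exact: (@Nge0v R n N hN).
have v0 : forall t, 0 <= v t by move=> t; exact: (@Nge0v R n N hN).
pose X t := N (what t - sat (what t)).
have Hrec : forall t, (Tbar <= t)%N -> u t <= a * X (t - Tbar)%N + v t.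
  move=> t Tt; rewrite /u hhigh //; move: (hN) => -[_ hT _].
  apply: (le_trans (hT _ _)); rewrite lerD2r; exact: Ha.
have Hlow : forall t, (t < Tbar)%N -> u t = v t by move=> t Tt; rewrite /u hlow.
have lpE : forall x, lpnorm N p x = @lpr R p (fun k => N (x k)) by move=> x; case: p hp.
split.
  move=> g g0; rewrite lt_min => /andP[g1 ga] hw.
  rewrite !lpE -/u -/v.
  rewrite lpE -/v in hw.
  move: hw heta; case E: (etabar N W) => [E0| |] hw heta.
  - have E00 : 0 < E0 by rewrite -lte_fin.
    have ag : 0 < a - g by rewrite subr_gt0.
    pose B := a * E0 / (a - g).
    have B0 : 0 <= B by rewrite /B divr_ge0 ?mulr_ge0 // ltW.
    apply: (@lp_main1 R p Tbar g B) => //.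
      move=> t; rewrite /sh; case: ifP => Tt hs; last by rewrite mulr0 add0r Hlow // ltnNge Tt.
      apply: (le_trans (Hrec t Tt)); rewrite lerD2r.
      have Nh0 := u0 (t - Tbar)%N.
      case: (@sat_fin R n N W sat hN hsat (what (t - Tbar)%N) E0 E E00) => HX.
        by rewrite -/(X _) in HX; nra.
      rewrite -/(X _) -/(u _) in HX.
      have hs' : u (t - Tbar)%N * (a - g) <= a * E0 by rewrite -ler_pdivlMr.
      have := ler_wpM2l a0 HX; nra.
    have -> : (1 - g) * B = (1 - g) * a / (a - g) * E0.
      by rewrite /B; field; rewrite gt_eqF.
    by rewrite EFinM.
  - apply: (@lp_main2 R p Tbar g) => // t.
    rewrite /sh; case: ifP => Tt; last by rewrite mulr0 add0r Hlow // ltnNge Tt.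
    apply: (le_trans (Hrec t Tt)); rewrite lerD2r.
    have := @sat_inf R n N W sat hN hsat (what (t - Tbar)%N) E; rewrite -/(X _) => HX.
    by apply: (le_trans (y := 0)); [rewrite mulr_ge0_le0 | rewrite mulr_ge0].
  - by [].
move=> a1 _.
rewrite !lpE -/u -/v.
apply: (@lp_main2 R p Tbar a) => // t.
rewrite /sh; case: ifP => Tt; last by rewrite mulr0 add0r Hlow // ltnNge Tt.
apply: (le_trans (Hrec t Tt)); rewrite lerD2r ler_wpM2l //.
exact: (@sat_le R n N W sat hN hsat).
Qed.
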